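(* Let $G$ be an amenable group with finitely additive left-invariant mean $\mu$, let $X\subset G$ be a symmetric subset containing the identity, and let $m\in\mathbb{N}$. Suppose $\mu(X)\ge\frac{1}{m}$. Then the subgroup $\langle X\rangle$ generated by $X$ equals $X^{3m-1}$.
   Context: A finitely additive left-invariant mean is a positive linear functional $\int\cdot\,d\mu$ on $\ell^\infty(G)$ with $\int1_G\,d\mu=1$ and $\int f(g^{-1}\cdot)\,d\mu=\int f\,d\mu$; $\mu(X)=\int1_X\,d\mu$. $X^k$ is the set of products of $k$ elements of $X$. *)

(* Defs.v *)
From Stdlib Require Import Reals ClassicalEpsilon.
Open Scope R_scope.

Record Group : Type := MkGroup {
  carrier :> Type;
  gmul : carrier -> carrier -> carrier;
  gone : carrier;
  ginv : carrier -> carrier;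
  gmulA : forall x y z, gmul x (gmul y z) = gmul (gmul x y) z;
  gmul1l : forall x, gmul gone x = x;
  gmul1r : forall x, gmul x gone = x;
  gmulVl : forall x, gmul (ginv x) x = gone;
  gmulVr : forall x, gmul x (ginv x) = gone
}.

Definition bounded {G : Group} (f : G -> R) : Prop :=
  exists M : R, forall g, Rabs (f g) <= M.

(* Values on unbounded functions are irrelevant. *)
Definition left_invariant_mean (G : Group) (mu : (G -> R) -> R) : Prop :=
  (forall f h, bounded f -> bounded h ->
      mu (fun x => f x + h x) = mu f + mu h) /\
  (forall (c : R) f, bounded f -> mu (fun x => c * f x) = c * mu f) /\
  (forall f, bounded f -> (forall x, 0 <= f x) -> 0 <= mu f) /\
  mu (fun _ => 1) = 1 /\
  (forall f (g : G), bounded f ->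
      mu (fun x => f (gmul G (ginv G g) x)) = mu f).

Definition indicator {G : Group} (X : G -> Prop) : G -> R :=
  fun x => if excluded_middle_informative (X x) then 1 else 0.

Definition measure_of {G : Group} (mu : (G -> R) -> R) (X : G -> Prop) : R :=
  mu (indicator X).

Fixpoint prodset {G : Group} (X : G -> Prop) (k : nat) : G -> Prop :=
  match k with
  | O => fun g => g = gone G
  | S k' => fun g => exists x y, prodset X k' x /\ X y /\ g = gmul G x y
  end.

Definition subgroup {G : Group} (H : G -> Prop) : Prop :=
  H (gone G) /\ (forall x y, H x -> H y -> H (gmul G x y)) /\
  (forall x, H x -> H (ginv G x)).

Definition generated {G : Group} (X : G -> Prop) : G -> Prop :=
  fun g => forall H : G -> Prop, subgroup H -> (forall x, X x -> H x) -> H g.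

(* Main.v *)
Require Import Defs.
From Stdlib Require Import Reals ClassicalEpsilon Classical Lia Lra.
Open Scope R_scope.

Section Aux.
Variable G : Group.
Variable X : G -> Prop.
Hypothesis Xsym : forall x, X x -> X (ginv G x).
Hypothesis X1 : X (gone G).

Lemma inv_uniq (a b : G) : gmul G a b = gone G -> b = ginv G a.
Proof.
  intro H. rewrite <- (gmul1l G b). rewrite <- (gmulVl G a). rewrite <- gmulA.
  rewrite H. apply gmul1r.
Qed.

Lemma ginv_inv (x : G) : ginv G (ginv G x) = x.
Proof. symmetry. apply inv_uniq. apply gmulVl. Qed.

Lemma ginv_mul (x y : G) : ginv G (gmul G x y) = gmul G (ginv G y) (ginv G x).
Proof.
  symmetry. apply inv_uniq. rewrite <- gmulA. rewrite (gmulA G y).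
  rewrite gmulVr, gmul1l. apply gmulVr.
Qed.

Lemma ginv_one : ginv G (gone G) = gone G.
Proof. rewrite <- (gmul1l G (ginv G (gone G))). apply gmulVr. Qed.

Lemma P_succ n x : prodset X n x -> prodset X (S n) x.
Proof. intro H. exists x, (gone G). split; [exact H|split; [exact X1|]]. now rewrite gmul1r. Qed.

Lemma P_mono a b x : (a <= b)%nat -> prodset X a x -> prodset X b x.
Proof. induction 1; auto using P_succ. Qed.

Lemma P_mul a b x y : prodset X a x -> prodset X b y -> prodset X (a + b) (gmul G x y).
Proof.
  revert y. induction b as [|b IH]; intros y Hx Hy.
  - simpl in Hy. subst y. rewrite gmul1r. now rewrite Nat.add_0_r.
  - destruct Hy as [y' [z [Hy' [Hz ->]]]]. rewrite Nat.add_succ_r.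
    exists (gmul G x y'), z. split; [auto|split; [auto|]]. apply gmulA.
Qed.

Lemma P_inv n x : prodset X n x -> prodset X n (ginv G x).
Proof.
  revert x. induction n as [|n IH]; intros x Hx.
  - simpl in *. subst. apply ginv_one.
  - destruct Hx as [x' [z [Hx' [Hz ->]]]]. rewrite ginv_mul.
    replace (S n) with (1 + n)%nat by lia. apply P_mul; auto.
    exists (gone G), (ginv G z). split; [reflexivity|split; [auto|]]. now rewrite gmul1l.
Qed.

Lemma P_X x : X x -> prodset X 1 x.
Proof. intro H. exists (gone G), x. split; [reflexivity|split; [auto|]]. now rewrite gmul1l. Qed.

Definition stable n := forall x, prodset X (S n) x -> prodset X n x.

Lemma stable_next n : stable n -> stable (S n).
Proof.
  intros H x [y [z [Hy [Hz ->]]]]. exists y, z. split; auto.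
Qed.

Lemma stable_up n j : stable n -> stable (n + j).
Proof.
  induction j; intro H. now rewrite Nat.add_0_r. rewrite Nat.add_succ_r. apply stable_next; auto.
Qed.

Lemma stable_all n j x : stable n -> prodset X (n + j) x -> prodset X n x.
Proof.
  revert x. induction j; intros x H Hx. now rewrite Nat.add_0_r in Hx.
  apply IHj; auto. rewrite Nat.add_succ_r in Hx. apply (stable_up n j H). exact Hx.
Qed.

End Aux.

Theorem lemma5p4 (G : Group) (mu : (G -> R) -> R)
  (Hmu : left_invariant_mean G mu)
  (X : G -> Prop)
  (Xsym : forall x, X x -> X (ginv G x))
  (X1 : X (gone G))
  (m : nat) (Hm : (1 <= m)%nat)
  (HX : measure_of mu X >= / INR m) :
  forall g : G, generated X g <-> prodset X (3 * m - 1) g.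
Proof.
  destruct Hmu as [Hadd [Hscal [Hpos [H1 Hinv]]]].
  set (N := (3 * m - 1)%nat).
  assert (Hind_b : Defs.bounded (indicator X)).
  { exists 1. intro g. unfold indicator. destruct excluded_middle_informative;
    rewrite ?Rabs_R1, ?Rabs_R0; lra. }
  assert (Hst : stable G X N).
  { apply NNPP. intro Hns.
    assert (Hns' : forall n, (n <= N)%nat -> exists x, prodset X (S n) x /\ ~ prodset X n x).
    { intros n Hn. apply NNPP. intro Hc. apply Hns.
      replace N with (n + (N - n))%nat by lia. apply stable_up.
      intros x Hx. apply NNPP. intro Hx'. apply Hc. eauto. }
    assert (Hk : forall k, (k <= m)%nat -> exists F : G -> R,
      (forall x, 0 <= F x <= 1) /\ (forall x, ~ prodset X (3 * k + 1) x -> F x = 0) /\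
      mu F = INR (S k) * measure_of mu X).
    { induction k as [|k IH]; intro Hkm.
      - exists (indicator X). split; [|split].
        + intro x. unfold indicator. destruct excluded_middle_informative; lra.
        + intros x Hx. unfold indicator. destruct excluded_middle_informative as [h|h]; auto.
          exfalso. apply Hx. apply P_X; auto.
        + unfold measure_of. simpl. lra.
      - destruct (IH ltac:(lia)) as [F [HF0 [HF1 HF2]]].
        destruct (Hns' (3 * k + 2)%nat ltac:(lia)) as [g [Hg1 Hg2]].
        exists (fun x => F x + indicator X (gmul G (ginv G g) x)).
        assert (Hdis : forall x, X (gmul G (ginv G g) x) -> ~ prodset X (3 * k + 1) x).
        { intros x Hx Hp. apply Hg2.
          replace g with (gmul G x (ginv G (gmul G (ginv G g) x))).
          - replace (3 * k + 2)%nat with (3 * k + 1 + 1)%nat by lia.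
            apply P_mul; auto. apply P_X; auto.
          - rewrite ginv_mul, ginv_inv, gmulA, gmulVr, gmul1l. reflexivity. }
        split; [|split].
        + intro x. unfold indicator. destruct excluded_middle_informative as [h|h].
          * rewrite (HF1 x (Hdis x h)). lra.
          * specialize (HF0 x). lra.
        + intros x Hx. unfold indicator. destruct excluded_middle_informative as [h|h].
          * exfalso. apply Hx. replace x with (gmul G g (gmul G (ginv G g) x)).
            -- replace (3 * S k + 1)%nat with (S (3 * k + 2) + 1)%nat by lia.
               apply P_mul; auto. apply P_X; auto.
            -- rewrite gmulA, gmulVr, gmul1l. reflexivity.
          * rewrite HF1. lra. intro Hp. apply Hx. apply (P_mono G X X1 (3 * k + 1)); auto; lia.
        + rewrite Hadd.
          * rewrite HF2. rewrite (Hinv (indicator X) g Hind_b). unfold measure_of.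
            rewrite (S_INR (S k)). lra.
          * exists 1. intro x. specialize (HF0 x). rewrite Rabs_pos_eq; lra.
          * destruct Hind_b as [M HM]. exists M. intro x. apply HM. }
    destruct (Hk m (le_n m)) as [F [HF0 [_ HF2]]].
    assert (HFb : Defs.bounded F).
    { exists 1. intro x. specialize (HF0 x). rewrite Rabs_pos_eq; lra. }
    assert (Hle : 0 <= mu (fun x => 1 + (-1) * F x)).
    { apply Hpos. exists 1. intro x.
      specialize (HF0 x). rewrite Rabs_pos_eq; lra. intro x. specialize (HF0 x). lra. }
    rewrite Hadd in Hle.
    2: { exists 1. intro. rewrite Rabs_R1. lra. }
    2: { destruct HFb as [M HM]. exists (Rabs (-1) * M). intro x.
         rewrite Rabs_mult. apply Rmult_le_compat_l. apply Rabs_pos. apply HM. }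
    rewrite Hscal in Hle by exact HFb. rewrite H1, HF2 in Hle.
    rewrite S_INR in Hle.
    assert (Hm1 : 1 <= INR m) by (replace 1 with (INR 1) by reflexivity; apply le_INR; lia).
    assert (HmX : INR m * measure_of mu X >= 1).
    { replace 1 with (INR m * / INR m) by (field; lra).
      apply Rle_ge. apply Rmult_le_compat_l; lra. }
    assert (0 < / INR m) by (apply Rinv_0_lt_compat; lra).
    nra. }
  intro g. split.
  - intro Hg. apply Hg.
    + split; [|split].
      * apply (P_mono G X X1 0); [lia|reflexivity].
      * intros x y Hx Hy. apply (stable_all G X N N); auto. apply P_mul; auto.
      * intros x Hx. apply P_inv; auto.
    + intros x Hx. apply (P_mono G X X1 1); [lia|]. apply P_X; auto.
  - generalize N. intros n Hn. intros H [Hh1 [Hhm Hhi]] HXH.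
    revert g Hn. induction n as [|n IH]; intros g Hn.
    + simpl in Hn. subst. auto.
    + destruct Hn as [y [z [Hy [Hz ->]]]]. auto.
Qed.
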